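(* Consider multiclass data $(x,y)$ with $x\in\mathcal{X}\subseteq\mathbb{R}^d$ drawn from a fixed distribution and labels $y\in\{1,\dots,k\}$, where $k\ge2$. A binary decision tree is grown top-down from a single root leaf. At each step $t=1,2,\dots$, the leaf $m$ of largest weight is split into two children using a hypothesis $h_m:\mathcal{X}\to\{-1,1\}$: $h_m(x)=1$ sends $x$ to the right child and $h_m(x)=-1$ sends it to the left child. After $t$ steps the tree has $t$ internal nodes. Assume the Weak Hypothesis Assumption holds with parameter $\gamma$: there is $\gamma>0$ such that for every split node $m$, \[ \gamma\le\min(\beta_m,1-\beta_m)\quad\text{and}\quad \tfrac12 J(h_m)=\sum_{i=1}^k\pi_{m,i}\,|P_{m,i}-\beta_m|\ge\gamma . \] Then for any $\alpha\in[0,2\ln k]$, the entropy after $t$ splits satisfies $G_t^e\le\alpha$ whenever \[ t\ \ge\ \left(\frac{2\ln k}{\alpha}\right)^{\frac{4(1-\gamma)^2}{\gamma^2\log_2 e}\ln k}. \]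
   Context: For a node $m$, $w_m$ is the probability that $x$ reaches $m$ (its weight). $\pi_{m,i}$ is the probability that $x$ has label $i$ given that it reaches $m$. $\beta_m=P(h_m(x)>0)$ and $P_{m,i}=P(h_m(x)>0\mid i)$, both computed for $x$ conditioned on reaching $m$ (the latter also conditioned on label $i$). Thus \[ J(h_m)=2\sum_i\pi_{m,i}\,|\beta_m-P_{m,i}|. \] For the tree after $t$ splits with leaf set $\mathcal{L}$, \[ G_t^e=\sum_{l\in\mathcal{L}}w_l\sum_{i=1}^k\pi_{l,i}\ln\frac{1}{\pi_{l,i}}, \] with the convention $0\ln(1/0)=0$. *)

(* Defs.v *)
From HB Require Import structures.
From mathcomp Require Import all_boot all_order all_algebra.
From mathcomp Require Import all_classical all_reals all_analysis.
Set Implicit Arguments. Unset Strict Implicit. Unset Printing Implicit Defensive.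
Import Order.TTheory GRing.Theory Num.Theory.
Local Open Scope classical_set_scope.
Local Open Scope ring_scope.

(* Data model: a probability space (Omega, P); the data point (x,y) is given by
   random variables  X : Omega -> 'rV[R]_d  (the feature vector) and
   Y : Omega -> 'I_k (the label; label i+1 of the paper is the ordinal i).
   A node of the tree is represented by its region S : set 'rV[R]_d, the set of
   feature vectors routed to it. *)
Section TreeDefs.
Variables (R : realType) (dO : measure_display) (Omega : measurableType dO).
Variable (P : probability Omega R).
Variables (d k : nat) (X : Omega -> 'rV[R]_d) (Y : Omega -> 'I_k).

Definition weight (S : set 'rV[R]_d) : R := fine (P (X @^-1` S)).

Definition jointw (S : set 'rV[R]_d) (i : 'I_k) : R :=
  fine (P (X @^-1` S `&` Y @^-1` [set i])).

Definition pi_ (S : set 'rV[R]_d) (i : 'I_k) : R := jointw S i / weight S.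

Definition right_child (S : set 'rV[R]_d) (h : 'rV[R]_d -> R) :=
  S `&` [set z | 0 < h z].
(* region of the left child: h = -1, i.e. not (h > 0) *)
Definition left_child (S : set 'rV[R]_d) (h : 'rV[R]_d -> R) :=
  S `&` [set z | ~ (0 < h z)].

Definition beta_ (S : set 'rV[R]_d) (h : 'rV[R]_d -> R) : R :=
  weight (right_child S h) / weight S.

Definition Pmi (S : set 'rV[R]_d) (h : 'rV[R]_d -> R) (i : 'I_k) : R :=
  jointw (right_child S h) i / jointw S i.

Definition Jsplit (S : set 'rV[R]_d) (h : 'rV[R]_d -> R) : R :=
  2 * \sum_(i < k) pi_ S i * `|beta_ S h - Pmi S h i|.

(* entropy of a tree given by the list of regions of its leaves,
   with the convention 0 ln (1/0) = 0 *)
Definition entropyG (L : seq (set 'rV[R]_d)) : R :=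
  \sum_(l <- L) weight l *
     \sum_(i < k) (if pi_ l i == 0 then 0 else pi_ l i * ln (pi_ l i)^-1).

Definition WHA (Xset : set 'rV[R]_d) (gamma : R) (S : set 'rV[R]_d)
    (h : 'rV[R]_d -> R) : Prop :=
  [/\ (forall z, Xset z -> h z = 1 \/ h z = -1),
      measurable (X @^-1` [set z | 0 < h z]),
      gamma <= Num.min (beta_ S h) (1 - beta_ S h) &
      gamma <= Jsplit S h / 2].

Definition grow_step (Xset : set 'rV[R]_d) (gamma : R)
    (L L' : seq (set 'rV[R]_d)) : Prop :=
  exists (L1 L2 : seq (set 'rV[R]_d)) (m : set 'rV[R]_d) (h : 'rV[R]_d -> R),
    [/\ L = L1 ++ m :: L2,
        (forall (A B : seq (set 'rV[R]_d)) (l : set 'rV[R]_d),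
           L = A ++ l :: B -> weight l <= weight m),
        WHA Xset gamma m h &
        L' = L1 ++ right_child m h :: left_child m h :: L2].

End TreeDefs.

Definition log2 {R : realType} (x : R) : R := ln x / ln 2.

(* Main.v *)
Require Import Defs.
From HB Require Import structures.
From mathcomp Require Import all_boot all_order all_algebra.
From mathcomp Require Import all_classical all_reals all_analysis.
From mathcomp Require Import ring lra.
Import Order.TTheory GRing.Theory Num.Theory.
Local Open Scope ring_scope.

Section Real.
Context {R : realType}.

Lemma ln_le_sub1 (y : R) : 0 < y -> ln y <= y - 1.
Proof. move=> y0; have := @le_ln1Dx R (y - 1); rewrite (addrC 1) subrK; apply; lra. Qed.

Lemma lnD (a b : R) : 0 < a -> 0 < b -> ln (a / b) = ln a - ln b.
Proof. by move=> a0 b0; rewrite lnM ?posrE ?invr_gt0 // lnV ?posrE. Qed.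

Lemma poly_key (a b c e : R) : 0 <= a -> 0 <= b -> 0 <= c -> 0 <= e ->
  a^+2 + c^+2 = 1 -> b^+2 + e^+2 = 1 ->
  (a^+2 - b^+2)^+2 <= 2 - 2*a*b - 2*c*e.
Proof.
move=> a0 b0 c0 e0 h1 h2.
have hD1 : (a^+2 - b^+2)^+2 = (a-b)^+2 * (a+b)^+2 by ring.
have hD2 : (a^+2 - b^+2)^+2 = (c-e)^+2 * (c+e)^+2.
  have -> : a^+2 - b^+2 = e^+2 - c^+2 by lra.
  by ring.
have hR : 2 - 2*a*b - 2*c*e = (a-b)^+2 + (c-e)^+2 by rewrite !sqrrB; lra.
have hSU : (a+b)^+2 + (c+e)^+2 <= 4.
  have : 0 <= (a-b)^+2 + (c-e)^+2 by rewrite addr_ge0 // sqr_ge0.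
  rewrite !sqrrB !sqrrD; lra.
rewrite hR.
move: hD1 hD2 hSU.
set D := (a^+2 - b^+2)^+2; set X := (a-b)^+2; set Y := (c-e)^+2;
set S := (a+b)^+2; set U := (c+e)^+2.
have X0 : 0 <= X by rewrite sqr_ge0. have Y0 : 0 <= Y by rewrite sqr_ge0.
have S0 : 0 <= S by rewrite sqr_ge0. have U0 : 0 <= U by rewrite sqr_ge0.
move=> e1 e2 hSU.
have D0 : 0 <= D by rewrite e1 mulr_ge0.
have h4 : 2 * D <= X * U + Y * S.
  have hsq : (2*D)^+2 <= (X*U + Y*S)^+2.
    have : 0 <= (X*U - Y*S)^+2 by rewrite sqr_ge0.
    have -> : (2*D)^+2 = 4 * ((X*S)*(Y*U)) by rewrite -e1 -e2; ring.
    move=> h; rewrite sqrrD; rewrite sqrrB in h; nra.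
  have p0 : 0 <= X*U + Y*S by rewrite addr_ge0 // mulr_ge0.
  have q0 : 0 <= 2*D by rewrite mulr_ge0.
  by move: hsq; rewrite -[_ <= _]ler_sqrt ?sqr_ge0 // !sqrtr_sqr !ger0_norm.
have : (X+Y)*(S+U) <= 4*(X+Y) by rewrite [4*_]mulrC ler_wpM2l ?addr_ge0.
nra.
Qed.

Lemma Tlem (x b : R) : 0 <= x -> 0 < b ->
  2*x - 2 * (Num.sqrt x * Num.sqrt b) <= x * ln (x / b).
Proof.
move=> x0 b0; have [->|xp] := eqVneq x 0.
  by rewrite sqrtr0 !(mul0r, mulr0) subrr.
have xpos : 0 < x by rewrite lt_def xp x0.
set a := Num.sqrt x; set c := Num.sqrt b.
have a0 : 0 < a by rewrite sqrtr_gt0.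
have c0 : 0 < c by rewrite sqrtr_gt0.
have ea : x = a^+2 by rewrite sqr_sqrtr.
have ec : b = c^+2 by rewrite sqr_sqrtr // ltW.
have -> : x / b = (a / c)^+2 by rewrite expr_div_n -ea -ec.
rewrite lnXn ?divr_gt0 //.
have : ln (c / a) <= c / a - 1 by apply: ln_le_sub1; rewrite divr_gt0.
have -> : ln (a / c) = - ln (c / a) by rewrite -lnV ?posrE ?divr_gt0 // invf_div.
move=> h.
have e1 : x * (c / a) = a * c by rewrite ea; field; rewrite gt_eqF.
rewrite mulr2n; nra.
Qed.

Lemma Bin (x b : R) : 0 <= x <= 1 -> 0 < b < 1 ->
  (b - x)^+2 <= x * ln (x / b) + (1 - x) * ln ((1 - x) / (1 - b)).
Proof.
move=> /andP[x0 x1] /andP[b0 b1].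
have h1 := Tlem x b x0 b0.
have h2 : 2*(1-x) - 2 * (Num.sqrt (1-x) * Num.sqrt (1-b)) <=
   (1-x) * ln ((1-x) / (1-b)) by apply: Tlem; lra.
have := @poly_key (Num.sqrt x) (Num.sqrt b) (Num.sqrt (1-x)) (Num.sqrt (1-b)).
rewrite !sqrtr_ge0 !sqr_sqrtr; try lra.
Qed.

Definition phi (p : R) := if p == 0 then 0 else p * ln p^-1.

Lemma Wphi (W a : R) : 0 < W -> 0 <= a -> W * phi (a / W) = a * ln (W / a).
Proof.
move=> W0 a0; rewrite /phi; have [->|ap] := eqVneq a 0.
  by rewrite mul0r eqxx mulr0 mul0r.
have : a / W != 0 by rewrite mulf_neq0 // invr_eq0 gt_eqF.
move=> /negPf ->; rewrite invf_div mulrA; congr (_ * _); field; by rewrite gt_eqF.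
Qed.

Lemma mlnD (r a b : R) : 0 <= r -> (0 < r -> 0 < a /\ 0 < b) ->
  r * ln (a / b) = r * (ln a - ln b).
Proof.
move=> r0 h; have [->|rp] := eqVneq r 0; first by rewrite !mul0r.
have [a0 b0] : 0 < a /\ 0 < b by apply: h; rewrite lt_def rp r0.
by rewrite lnD.
Qed.

Lemma mln4 (r q A B : R) : 0 <= r -> 0 < q -> 0 < A -> 0 < B ->
  r * ln (r / q / (A / B)) = r * (ln r - ln q - ln A + ln B).
Proof.
move=> r0 q0 A0 B0; have [->|rp] := eqVneq r 0; first by rewrite !mul0r.
have rpos : 0 < r by rewrite lt_def rp r0.
rewrite lnD ?divr_gt0 // !lnD //; congr (_ * _); ring.
Qed.

Lemma mln2 (r A : R) : 0 <= r -> 0 < A -> r * ln (A / r) = r * (ln A - ln r).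
Proof.
move=> r0 A0; have [->|rp] := eqVneq r 0; first by rewrite !mul0r.
have rpos : 0 < r by rewrite lt_def rp r0.
by rewrite lnD.
Qed.

Lemma key (W WR WL r l : R) : 0 < WR -> 0 < WL -> W = WR + WL ->
  0 <= r -> 0 <= l ->
  W * ((r + l) / W) * (WR / W - r / (r + l)) ^+ 2 <=
  W * phi ((r + l) / W) - WR * phi (r / WR) - WL * phi (l / WL).
Proof.
move=> WR0 WL0 eW r0 l0.
have W0 : 0 < W by rewrite eW addr_gt0.
rewrite !Wphi ?addr_ge0 //.
have [q0|qp] := eqVneq (r + l) 0.
  have -> : r = 0 by lra.
  have -> : l = 0 by lra.
  by rewrite !(addr0, mul0r, mulr0, subrr).
set q := r + l in qp *.
have qpos : 0 < q by rewrite lt_def qp addr_ge0.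
have -> : W * (q / W) = q by field; rewrite gt_eqF.
set x := r / q; set b := WR / W.
have ex : 1 - x = l / q by rewrite /x /q; field; rewrite gt_eqF.
have eb : 1 - b = WL / W by rewrite /b eW; field; rewrite gt_eqF // addr_gt0.
have x01 : 0 <= x <= 1.
  apply/andP; split; first by rewrite divr_ge0 // ltW.
  by rewrite ler_pdivrMr // mul1r /q lerDl.
have b01 : 0 < b < 1.
  apply/andP; split; first by rewrite divr_gt0.
  by rewrite ltr_pdivrMr // mul1r eW ltrDl.
have hB := Bin x b x01 b01; rewrite ex eb in hB.
have : q * (b - x) ^+ 2 <= q * (x * ln (x / b) + l / q * ln (l / q / (WL / W))).
  by rewrite ler_wpM2l // ltW.
have -> : q * (x * ln (x / b) + l / q * ln (l / q / (WL / W))) =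
  r * ln (x / b) + l * ln (l / q / (WL / W)).
  by rewrite /x; field; rewrite gt_eqF.
rewrite /x /b.
suff -> : q * ln (W / q) - r * ln (WR / r) - l * ln (WL / l) =
  r * ln (r / q / (WR / W)) + l * ln (l / q / (WL / W)) by [].
rewrite !mln4 // !mln2 ?addr_ge0 // /q; ring.
Qed.

Lemma cauchy (k : nat) (p d : 'I_k -> R) : (forall i, 0 <= p i) ->
  \sum_i p i <= 1 -> (\sum_i p i * d i) ^+ 2 <= \sum_i p i * d i ^+ 2.
Proof.
move=> p0 s1.
have e : forall m, \sum_i p i * (d i - m) ^+ 2 =
   \sum_i (p i * d i ^+ 2) - 2 * m * (\sum_i p i * d i) + m ^+ 2 * \sum_i p i.
  move=> m; rewrite !mulr_sumr -sumrB -big_split /=.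
  by apply: eq_bigr => i _; ring.
set m := \sum_i p i * d i.
have h : 0 <= \sum_i p i * (d i - m) ^+ 2.
  by apply: sumr_ge0 => i _; rewrite mulr_ge0 // sqr_ge0.
rewrite e in h.
have : m ^+ 2 * \sum_i p i <= m ^+ 2 by rewrite ler_piMr ?sqr_ge0.
rewrite -mulrA -expr2 in h; lra.
Qed.

Lemma gibbs (k : nat) (p : 'I_k -> R) : (0 < k)%N -> (forall i, 0 <= p i) ->
  \sum_i p i = 1 -> \sum_i phi (p i) <= ln (k%:R).
Proof.
move=> k0 p0 s1; set K : R := k%:R.
have K0 : 0 < K by rewrite ltr0n.
have h : forall i, phi (p i) <= p i * ln K + K^-1 - p i.
  move=> i; rewrite /phi; have [->|pp] := eqVneq (p i) 0.
    by rewrite mul0r add0r subr0 invr_ge0 ltW.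
  have pos : 0 < p i by rewrite lt_def pp p0.
  have -> : (p i)^-1 = K * (K * p i)^-1 by field; rewrite pp pnatr_eq0 -lt0n k0.
  rewrite lnM ?posrE ?invr_gt0 ?mulr_gt0 //.
  have := @ln_le_sub1 ((K * p i)^-1); rewrite invr_gt0 mulr_gt0 // => /(_ isT).
  have e : p i * ((K * p i)^-1 - 1) = K^-1 - p i by field; rewrite pp pnatr_eq0 -lt0n k0.
  move=> hl; rewrite mulrDr -addrA -e lerD2l ler_wpM2l // ltW.
apply: le_trans (ler_sum _ (fun i _ => h i)) _.
rewrite big_split /= sumrN big_split /= -mulr_suml s1 mul1r sumr_const card_ord.
by rewrite -mulr_natr mulVf ?gt_eqF // addrK.
Qed.

Lemma harm (s : nat) : ln (s.+1%:R : R) <= \sum_(j < s) (j.+1%:R : R)^-1.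
Proof.
elim: s => [|s IH]; first by rewrite big_ord0 ln1.
rewrite big_ord_recr /=.
have e : (s.+2%:R : R) = s.+1%:R * (1 + (s.+1%:R)^-1).
  by rewrite mulrDr mulr1 mulfV // -natr1.
rewrite e lnM ?posrE ?ltr0n ?addr_gt0 ?invr_gt0 ?ltr0n //.
apply: lerD => //; apply: le_ln1Dx.
have : 0 < (s.+1%:R : R)^-1 by rewrite invr_gt0 ltr0n.
by move=> h; apply: lt_trans h; rewrite oppr_lt0.
Qed.

Lemma ln2_ge : 31 / 50 <= ln (2 : R).
Proof.
have ep := expR_gt0 (31/200 : R).
have h1 : 169/200 <= (expR (31/200 : R))^-1.
  rewrite -expRN; have := expR_ge1Dx (- (31/200 : R)); lra.
have h2 : expR (31/200 : R) <= 200/169.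
  have : expR (31/200 : R) * (169/200) <= 1.
    by rewrite -[X in _ <= X](mulfV (lt0r_neq0 ep)) ler_wpM2l // ltW.
  lra.
have h3 : expR (31/50 : R) <= 2.
  rewrite (_ : 31/50 = 4%:R * (31/200) :> R); last by field.
  rewrite expRM_natl.
  apply: le_trans (lerXn2r 4 _ _ h2) _; rewrite ?nnegrE ?ltW //.
  rewrite expr_div_n ltr_pdivrMr ?exprn_gt0 //; lra.
have h4 : ln (expR (31/50 : R)) <= ln 2 by rewrite ler_ln ?posrE ?expR_gt0.
by rewrite expRK in h4.
Qed.
End Real.

Section Meas.
Variables (R : realType) (dO : measure_display) (Omega : measurableType dO).
Variable (P : probability Omega R).
Variables (d k : nat) (X : Omega -> 'rV[R]_d) (Y : Omega -> 'I_k).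
Hypothesis mY : forall i, measurable (Y @^-1` [set i]).
Local Open Scope classical_set_scope.

Lemma fP_ge0 (A : set Omega) : 0 <= fine (P A).
Proof. exact/fine_ge0/measure_ge0. Qed.

Lemma splitP (A B : set Omega) : measurable A -> measurable B ->
  fine (P A) = fine (P (A `&` B)) + fine (P (A `&` ~` B)).
Proof.
move=> mA mB.
have mAB : measurable (A `&` B) by exact: measurableI.
have mAC : measurable (A `&` ~` B) by apply: measurableI => //; exact: measurableC.
rewrite -fineD ?fin_num_measure // -measureU //.
  by rewrite -setIUr setUCr setIT.
by rewrite setIACA setICr setI0.
Qed.

Lemma labels (A : set Omega) : measurable A ->
  \sum_(i < k) fine (P (A `&` Y @^-1` [set i])) = fine (P A).
Proof.
move=> mA.
pose F := fun j : nat => A `&` [set w | nat_of_ord (Y w) = j].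
have eF : forall i : 'I_k, A `&` Y @^-1` [set i] = F i.
  move=> i; apply/seteqP; split=> w [Aw hw]; split=> //=.
    by rewrite /= in hw; rewrite hw.
  by apply: val_inj.
have mF : forall j, (j < k)%N -> measurable (F j).
  move=> j jk; rewrite -[j]/(nat_of_ord (Ordinal jk)) -eF.
  exact: measurableI.
have eU : \big[setU/set0]_(j < k) F j = A.
  rewrite -bigcup_mkord; apply/seteqP; split.
    by move=> w [j _ []].
  move=> w Aw; exists (Y w) => //=; exact: ltn_ord.
have tF : trivIset `I_k F.
  by move=> i j _ _ [w [[_ <-] [_ <-]]].
under eq_bigr => i _ do rewrite eF.
rewrite sum_fine; last by move=> i _; apply: fin_num_measure; exact: mF.
rewrite -measure_semi_additive_ord_I //; first by rewrite eU.
by rewrite eU.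
Qed.
End Meas.

Section Node.
Variables (R : realType) (dO : measure_display) (Omega : measurableType dO).
Variable (P : probability Omega R).
Variables (d k : nat) (X : Omega -> 'rV[R]_d) (Y : Omega -> 'I_k).
Hypothesis mY : forall i, measurable (Y @^-1` [set i]).
Local Open Scope classical_set_scope.

Definition Ent (S : set 'rV[R]_d) := weight P X S * \sum_(i < k) phi (pi_ P X Y S i).

Lemma node (Xset : set 'rV[R]_d) (gamma : R) (S : set 'rV[R]_d) h :
  measurable (X @^-1` S) -> 0 < gamma -> WHA P X Y Xset gamma S h ->
  [/\ weight P X S = weight P X (right_child S h) + weight P X (left_child S h),
      measurable (X @^-1` right_child S h), measurable (X @^-1` left_child S h) &
      weight P X S * gamma ^+ 2 <= Ent S - Ent (right_child S h) - Ent (left_child S h)].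
Proof.
move=> mS g0 [_ mH hmin hJ].
set H := X @^-1` [set z | 0 < h z] in mH.
have mR : measurable (X @^-1` right_child S h) by exact: measurableI.
have mL : measurable (X @^-1` left_child S h).
  by apply: measurableI => //; exact: measurableC.
have eW : weight P X S = weight P X (right_child S h) + weight P X (left_child S h).
  exact: (@splitP _ _ _ P _ _ mS mH).
split => //.
have eJ : forall i, jointw P X Y S i =
   jointw P X Y (right_child S h) i + jointw P X Y (left_child S h) i.
  move=> i; rewrite /jointw.
  have mA : measurable (X @^-1` S `&` Y @^-1` [set i]) by exact: measurableI.
  rewrite (@splitP _ _ _ P _ _ mA mH); congr (fine (P _) + fine (P _)).
    by rewrite setIAC.
  by rewrite setIAC.
rewrite le_min in hmin; case/andP: hmin => hb1 hb2.
set W := weight P X S; set WR := weight P X (right_child S h);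
set WL := weight P X (left_child S h).
have W0 : 0 <= W by apply: fP_ge0.
have Wpos : 0 < W.
  rewrite lt_def W0 andbT; apply/eqP => W00.
  by move: hb1; rewrite /beta_ -/W -/WR W00 invr0 mulr0 => /(lt_le_trans g0); rewrite ltxx.
have WRpos : 0 < WR.
  have : 0 < WR / W by apply: lt_le_trans hb1.
  by rewrite pmulr_lgt0 ?invr_gt0.
have WLpos : 0 < WL.
  have : 0 < 1 - WR / W by apply: lt_le_trans hb2.
  rewrite subr_gt0 ltr_pdivrMr // mul1r /W eW -/WR -/WL; lra.
have eE : Ent S - Ent (right_child S h) - Ent (left_child S h) =
  \sum_(i < k) (W * phi ((jointw P X Y (right_child S h) i + jointw P X Y (left_child S h) i) / W)
     - WR * phi (jointw P X Y (right_child S h) i / WR)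
     - WL * phi (jointw P X Y (left_child S h) i / WL)).
  rewrite /Ent !mulr_sumr -!sumrB; apply: eq_bigr => i _.
  by rewrite /pi_ -/W -/WR -/WL eJ.
rewrite eE.
have jR0 : forall i, 0 <= jointw P X Y (right_child S h) i by move=> i; apply: fP_ge0.
have jL0 : forall i, 0 <= jointw P X Y (left_child S h) i by move=> i; apply: fP_ge0.
apply: le_trans _ (ler_sum _ (fun i _ => key W WR WL _ _ WRpos WLpos eW (jR0 i) (jL0 i))).
have es : \sum_(i < k) W * ((jointw P X Y (right_child S h) i + jointw P X Y (left_child S h) i) / W) *
     (WR / W - jointw P X Y (right_child S h) i /
      (jointw P X Y (right_child S h) i + jointw P X Y (left_child S h) i)) ^+ 2 =
  W * \sum_(i < k) pi_ P X Y S i * `|beta_ P X S h - Pmi P X Y S h i| ^+ 2.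
  rewrite mulr_sumr; apply: eq_bigr => i _.
  by rewrite real_normK ?num_real // /pi_ /beta_ /Pmi -/W -/WR -eJ !mulrA.
rewrite es ler_wpM2l //.
have pi0 : forall i, 0 <= pi_ P X Y S i by move=> i; rewrite divr_ge0 // fP_ge0.
have s1 : \sum_(i < k) pi_ P X Y S i <= 1.
  rewrite /pi_ -mulr_suml -/W.
  have -> : \sum_(i < k) jointw P X Y S i = W by exact: (@labels _ _ _ P _ Y mY _ mS).
  by rewrite divff ?gt_eqF.
apply: le_trans (cauchy k (pi_ P X Y S) (fun i => `|beta_ P X S h - Pmi P X Y S h i|) pi0 s1).
have hg : gamma <= \sum_(i < k) pi_ P X Y S i * `|beta_ P X S h - Pmi P X Y S h i|.
  have e2 : forall z : R, 2 * z / 2 = z by move=> z; field.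
  by move: hJ; rewrite /Jsplit e2.
apply: lerXn2r => //; rewrite nnegrE; first exact: ltW.
exact: le_trans (ltW g0) hg.
Qed.
End Node.
Section Fin.
Context {R : realType}.

Lemma sum_le_max (T : Type) (f : T -> R) (M : R) (L : seq T) :
  (forall A B l, L = A ++ l :: B -> f l <= M) -> \sum_(l <- L) f l <= (size L)%:R * M.
Proof.
suff : forall pre, (forall A B l, pre ++ L = A ++ l :: B -> f l <= M) ->
   \sum_(l <- L) f l <= (size L)%:R * M by move=> h H; apply: (h [::]).
elim: L => [|x L IH] pre H; first by rewrite big_nil mul0r.
rewrite big_cons /= -add1n natrD mulrDl mul1r lerD //.
  by apply: (H pre L x).
apply: (IH (rcons pre x)) => A B l e; apply: (H A B l); by rewrite -cat_rcons.
Qed.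

Lemma final (Lk a g tt H G : R) : 0 < Lk -> 0 < a -> 0 < g -> g <= 1/2 -> 1 <= tt ->
  G <= Lk - g ^+ 2 * H -> ln tt <= H ->
  powR (2 * Lk / a) (4 * (1 - g) ^+ 2 / (g ^+ 2 * log2 (expR 1)) * Lk) <= tt ->
  G <= a.
Proof.
move=> Lk0 a0 g0 g1 t1 hG hH hP.
have lnt0 : 0 <= ln tt by rewrite ln_ge0.
have g2 : 0 < g ^+ 2 by rewrite exprn_gt0.
have hG2 : G <= Lk - g ^+ 2 * ln tt.
  by apply: le_trans hG _; rewrite lerD2l lerN2 ler_wpM2l // ltW.
have [aL|aL] := leP Lk a.
  apply: le_trans hG2 _; have : 0 <= g ^+ 2 * ln tt by rewrite mulr_ge0 // ltW.
  lra.
set b := 2 * Lk / a.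
have b0 : 0 < b by rewrite /b divr_gt0 // mulr_gt0.
set L := ln (2 : R).
have L1 : 31/50 <= L := @ln2_ge R.
have L2 : L <= 1 by have := @ln_le_sub1 R 2; rewrite -/L; lra.
have lb : L + 1 - a / Lk <= ln b.
  rewrite /b -mulrA lnM ?posrE ?divr_gt0 // -/L.
  have h := @ln_le_sub1 R (a / Lk); rewrite divr_gt0 // in h.
  have -> : ln (Lk / a) = - ln (a / Lk) by rewrite -lnV ?posrE ?divr_gt0 // invf_div.
  move: (h isT); lra.
set E := 4 * (1 - g) ^+ 2 / (g ^+ 2 * log2 (expR 1)) * Lk.
have hE : E * ln b <= ln tt.
  rewrite -ln_powR ler_ln ?posrE ?powR_gt0 //; lra.
have eE : E = 4 * (1 - g) ^+ 2 * L * Lk / g ^+ 2.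
  rewrite /E /log2 expRK -/L; field.
  by rewrite !gt_eqF //; apply: lt_le_trans L1; lra.
have key1 : L * Lk * ln b <= g ^+ 2 * ln tt.
  have au : a / Lk < 1 by rewrite ltr_pdivrMr // mul1r.
  have lbp : 0 <= ln b by lra.
  have : g ^+ 2 * (E * ln b) <= g ^+ 2 * ln tt by rewrite ler_wpM2l // ltW.
  rewrite eE; apply: le_trans.
  have -> : g ^+ 2 * (4 * (1 - g) ^+ 2 * L * Lk / g ^+ 2 * ln b) =
     (4 * (1 - g) ^+ 2) * (L * Lk * ln b) by field; rewrite gt_eqF.
  rewrite ler_peMl //; first by rewrite !mulr_ge0 //; lra.
  have : 1/2 <= 1 - g by lra.
  move=> h; have : (1/2)^+2 <= (1 - g)^+2 by apply: lerXn2r; rewrite ?nnegrE; lra.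
  lra.
apply: le_trans hG2 _; apply: le_trans (_ : Lk - L * Lk * ln b <= a).
  lra.
have : L * Lk * (L + 1 - a / Lk) <= L * Lk * ln b by rewrite ler_wpM2l // mulr_ge0 //; lra.
have eu : L * Lk * (L + 1 - a / Lk) = L * L * Lk + L * Lk - L * a.
  by field; rewrite gt_eqF.
rewrite eu => h.
have : 1 <= L * L + L by nra.
nra.
Qed.
End Fin.

Section Main.
Variables (R : realType) (dO : measure_display) (Omega : measurableType dO).
Variable (P : probability Omega R).
Variables (d k : nat) (X : Omega -> 'rV[R]_d) (Y : Omega -> 'I_k).
Hypothesis mY : forall i, measurable (Y @^-1` [set i]).
Local Open Scope classical_set_scope.

Fixpoint allm (L : seq (set 'rV[R]_d)) : Prop :=
  if L is l :: L' then measurable (X @^-1` l) /\ allm L' else True.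

Lemma allm_cat A B : allm (A ++ B) <-> allm A /\ allm B.
Proof. elim: A => [|a A IH] /=; first by tauto. by rewrite IH; tauto. Qed.

Definition Inv (gamma : R) (L : seq (set 'rV[R]_d)) (s : nat) :=
  [/\ size L = s.+1, allm L, \sum_(l <- L) weight P X l = 1 &
      entropyG P X Y L <= ln (k%:R) - gamma ^+ 2 * \sum_(j < s) (j.+1%:R : R)^-1].

Lemma step Xset gamma L L' s : 0 < gamma -> Inv gamma L s ->
  grow_step P X Y Xset gamma L L' -> Inv gamma L' s.+1.
Proof.
move=> g0 [hs hm hw he] [L1 [L2 [m [h [eL hmax hW eL']]]]].
subst L L'.
move: hm; rewrite allm_cat /= => -[hm1 [mm hm2]].
have [eW mR mL hE] := @node _ _ _ P _ _ X Y mY _ _ _ _ mm g0 hW.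
have wm : 1 <= (s.+1)%:R * weight P X m.
  rewrite -[X in X <= _]hw -hs; apply: sum_le_max => A B l e; exact: hmax A B l e.
split.
- by move: hs; rewrite !size_cat /= => <-; rewrite addnS.
- by rewrite allm_cat /=; tauto.
- by move: hw; rewrite !big_cat !big_cons /= eW; lra.
change (\sum_(l <- L1 ++ [:: right_child m h, left_child m h & L2]) Ent R dO Omega P d k X Y l <=
  ln (k%:R) - gamma ^+ 2 * \sum_(j < s.+1) (j.+1%:R : R)^-1).
have he' : \sum_(l <- L1 ++ [:: m & L2]) Ent R dO Omega P d k X Y l <=
  ln (k%:R) - gamma ^+ 2 * \sum_(j < s) (j.+1%:R : R)^-1 := he.
clear he.
rewrite big_cat !big_cons /= in he' *.
rewrite big_ord_recr /=.
have s0 : 0 < (s.+1%:R : R) by rewrite ltr0n.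
have iv : (s.+1%:R : R)^-1 <= weight P X m.
  by rewrite -div1r ler_pdivrMr // mulrC.
have : gamma ^+ 2 * (s.+1%:R : R)^-1 <= gamma ^+ 2 * weight P X m.
  by rewrite ler_wpM2l // ltW // exprn_gt0.
move: he' hE; set H := \sum_(j < s) _; set w := weight P X m.
set z := (s.+1%:R : R)^-1.
rewrite big_cat !big_cons /=; lra.
Qed.

Lemma base gamma : (0 < k)%N -> Inv gamma [:: setT] 0.
Proof.
move=> k0.
have w1 : weight P X setT = 1.
  by rewrite /weight preimage_setT probability_setT.
have mT : measurable (X @^-1` [set: 'rV[R]_d]) by rewrite preimage_setT.
split => //.
- by rewrite big_cons big_nil addr0.
rewrite big_ord0 mulr0 subr0 /entropyG big_cons big_nil addr0 w1 mul1r.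
apply: (gibbs k (pi_ P X Y setT) k0).
- by move=> i; rewrite /pi_ divr_ge0 // fP_ge0.
rewrite /pi_ w1; under eq_bigr => i _ do rewrite divr1.
rewrite -w1; exact: (@labels _ _ _ P _ Y mY _ mT).
Qed.
End Main.

Local Open Scope classical_set_scope.
Local Open Scope ring_scope.

Theorem theorem1 (R : realType) (dO : measure_display) (Omega : measurableType dO)
  (P : probability Omega R) (d k : nat) (Xset : set 'rV[R]_d)
  (X : Omega -> 'rV[R]_d) (Y : Omega -> 'I_k) (gamma : R)
  (Ls : nat -> seq (set 'rV[R]_d)) :
  (2 <= k)%N ->
  (forall w, Xset (X w)) ->
  (forall i, measurable (Y @^-1` [set i])) ->
  0 < gamma ->
  Ls 0%N = [:: setT] ->
  forall (alpha : R), 0 < alpha -> alpha <= 2 * ln (k%:R : R) ->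
  forall t : nat,
  (forall s : nat, (s < t)%N -> grow_step P X Y Xset gamma (Ls s) (Ls s.+1)) ->
  powR (2 * ln (k%:R : R) / alpha)
       (4 * (1 - gamma) ^+ 2 / (gamma ^+ 2 * log2 (expR 1)) * ln (k%:R : R))
    <= t%:R ->
  entropyG P X Y (Ls t) <= alpha.
Proof.
move=> hk hX mY g0 eL0 a a0 a2 t hsteps hpow.
have k0 : (0 < k)%N by apply: leq_trans hk.
have inv : forall s, (s <= t)%N -> @Inv _ _ _ P _ _ X Y gamma (Ls s) s.
  elim => [_|s IH st]; first by rewrite eL0; apply: (@base _ _ _ P _ _ X Y mY gamma k0).
  apply: (@step _ _ _ P _ _ X Y mY Xset gamma (Ls s) (Ls s.+1) s g0).
    by apply: IH; apply: ltnW.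
  exact: hsteps.
have [_ _ _ hG] := inv t (leqnn t).
have Lk0 : 0 < ln (k%:R : R) by apply: ln_gt0; rewrite ltr1n.
have t0 : (0 < t)%N.
  case: t hsteps hpow {inv hG} => // _ hpow.
  have : 0 < 2 * ln (k%:R : R) / a by rewrite divr_gt0 // mulr_gt0.
  move=> /(powR_gt0 (4 * (1 - gamma) ^+ 2 / (gamma ^+ 2 * log2 (expR 1)) * ln (k%:R : R))).
  by move=> h; have := lt_le_trans h hpow; rewrite ltxx.
have g1 : gamma <= 1/2.
  have [L1 [L2 [m [h [_ _ [_ _ hmin _] _]]]]] := hsteps 0%N t0.
  move: hmin; rewrite le_min => /andP[h1 h2]; lra.
apply: (final _ _ _ _ _ _ Lk0 a0 g0 g1 _ hG _ hpow).
  by rewrite ler1n.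
apply: le_trans (harm t).
by rewrite ler_ln ?posrE ?ltr0n // ler_nat.
Qed.
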